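(* For every $\epsilon$ with $0<\epsilon<1$ and every $F\in\mathbb{N}^d$, $$N(F)\le\sqrt{3}^{\,(1-2\epsilon^d)\|F\|}+\epsilon^d\|F\|\,\phi^{\|F\|}\left(\frac{\phi}{\sqrt[4]{5}}\right)^{(1-(1-\epsilon)^d)\|F\|},$$ where $\phi=\frac{1+\sqrt5}{2}$.
   Context: $\mathbb{N}=\{0,1,2,\dots\}$. A GNS is a submonoid $S\subseteq\mathbb{N}^d$ with finite complement $\mathcal{H}(S)=\mathbb{N}^d\setminus S$. A Frobenius GNS with Frobenius gap $F$ is a GNS such that $F$ is the unique maximal element of $\mathcal{H}(S)$ for the natural partial order. $N(F)$ is the number of Frobenius GNS $S\subseteq\mathbb{N}^d$ with Frobenius gap $F$. $\|F\|=\prod_{i=1}^d(F^{(i)}+1)$. *)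

(* Defs.v *)
From mathcomp Require Import all_boot.
From Stdlib Require Import Reals ClassicalEpsilon.
Set Implicit Arguments. Unset Strict Implicit. Unset Printing Implicit Defensive.

Definition pt (d : nat) := 'I_d -> nat.

Definition pt0 (d : nat) : pt d := fun _ => 0%N.
Definition ptadd (d : nat) (x y : pt d) : pt d := fun i => (x i + y i)%N.
Definition ptle (d : nat) (x y : pt d) : Prop := forall i, (x i <= y i)%N.
Definition ptlt (d : nat) (x y : pt d) : Prop := ptle x y /\ x <> y.

Definition is_GNS (d : nat) (S : pt d -> Prop) : Prop :=
  S (@pt0 d) /\
  (forall x y, S x -> S y -> S (ptadd x y)) /\
  (exists l : list (pt d), forall x, ~ S x -> List.In x l).

Definition is_Frobenius_GNS (d : nat) (S : pt d -> Prop) (F : pt d) : Prop :=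
  is_GNS S /\
  ~ S F /\
  (forall h, ~ S h -> ~ ptlt F h) /\
  (forall h, ~ S h -> (forall h', ~ S h' -> ~ ptlt h h') -> h = F).

(* Finite encoding used to count: every hole of a Frobenius GNS with gap F
   lies in the box [0, F], hence in the cube {0..m}^d with m = max_i F i.
   A GNS is determined by its (finite) hole set, so Frobenius GNS with gap F
   correspond bijectively to hole sets H : {set cube} with the property below. *)
Definition maxF (d : nat) (F : pt d) : nat := \max_(i < d) F i.
Definition cube (d : nat) (F : pt d) := {ffun 'I_d -> 'I_(maxF F).+1}.
Definition cube_pt (d : nat) (F : pt d) (c : cube F) : pt d :=
  fun i => nat_of_ord (c i).
Definition S_of (d : nat) (F : pt d) (H : {set cube F}) : pt d -> Prop :=
  fun x => ~ (exists c, c \in H /\ cube_pt c = x).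

Definition asbool (P : Prop) : bool :=
  if excluded_middle_informative P then true else false.

Definition NF (d : nat) (F : pt d) : nat :=
  #|[set H : {set cube F} | asbool (is_Frobenius_GNS (S_of H) F) ]|.

Definition normF (d : nat) (F : pt d) : nat := \prod_(i < d) (F i).+1.

Definition golden : R := ((1 + sqrt 5) / 2)%R.

(* Main.v *)
Require Import Defs.
From mathcomp Require Import all_boot.
From Stdlib Require Import Reals.
From Stdlib Require Import Lra Lia Psatz FunctionalExtensionality Classical ClassicalEpsilon.
From mathcomp Require Import zify.
Set Implicit Arguments. Unset Strict Implicit. Unset Printing Implicit Defensive.
Section Gen.
Variable T : finType.
Variable adj : rel T.

Definition indep (I : {set T}) := [forall x in I, forall y in I, ~~ adj x y].
Definition cnt (V : {set T}) := #|[set I : {set T} | (I \subset V) && indep I]|.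

Lemma indepP (I : {set T}) : reflect (forall x y, x \in I -> y \in I -> ~~ adj x y) (indep I).
Proof.
apply: (iffP forallP) => H.
  by move=> x y xI yI; move: (H x); rewrite xI /= => /forallP /(_ y); rewrite yI.
by move=> x; apply/implyP => xI; apply/forallP => y; apply/implyP => yI; apply: H.
Qed.

Lemma indep_sub (I J : {set T}) : I \subset J -> indep J -> indep I.
Proof.
move=> /subsetP IJ /indepP H; apply/indepP => x y xI yI; apply: H; exact: IJ.
Qed.

Lemma cnt_mono (V W : {set T}) : V \subset W -> cnt V <= cnt W.
Proof.
move=> VW; apply: subset_leq_card; apply/subsetP => I; rewrite !inE => /andP[IV ->].
by rewrite (subset_trans IV VW).
Qed.

Lemma cnt0 : cnt set0 = 1.
Proof.
rewrite /cnt -(cards1 (set0 : {set T})); apply: eq_card => I.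
rewrite !inE subset0; case: eqP => // ->; apply/indepP => x y; by rewrite inE.
Qed.

Lemma cnt_split (V1 V2 : {set T}) : [disjoint V1 & V2] ->
  (forall x y, x \in V1 -> y \in V2 -> ~~ adj x y && ~~ adj y x) ->
  cnt (V1 :|: V2) <= cnt V1 * cnt V2.
Proof.
move=> dis nadj.
set A := [set I : {set T} | (I \subset V1 :|: V2) && indep I].
set A1 := [set I : {set T} | (I \subset V1) && indep I].
set A2 := [set I : {set T} | (I \subset V2) && indep I].
rewrite /cnt -/A -/A1 -/A2 -cardsX.
have inj : {in A &, injective (fun I => (I :&: V1, I :&: V2))}.
  move=> I J; rewrite !inE => /andP[IV _] /andP[JV _] [e1 e2].
  by rewrite -(setIidPl IV) -(setIidPl JV) !setIUr e1 e2.
rewrite -(card_in_imset inj); apply: subset_leq_card; apply/subsetP => p /imsetP [I IA ->].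
move: IA; rewrite !inE => /andP[_ iI]; rewrite !subsetIr /=.
by rewrite !(indep_sub (subsetIl _ _) iI).
Qed.

Lemma cnt_peel (V : {set T}) v u : v \in V -> (adj v u || adj u v) ->
  (forall w, w \in V -> w != v -> adj v w || adj w v -> w = u) ->
  cnt V <= cnt (V :\ v) + cnt (V :\ v :\ u).
Proof.
move=> vV avu nb.
set A := [set I : {set T} | (I \subset V) && indep I].
rewrite /cnt -/A -(cardsID [set I : {set T} | v \in I] A) addnC.
apply: leq_add.
  apply: subset_leq_card; apply/subsetP => I; rewrite !inE => /andP[vI /andP[IV iI]].
  rewrite iI andbT; apply/subsetP => x xI; rewrite !inE (subsetP IV x xI) andbT.
  by apply: contraNneq vI => <-.
have inj : {in A :&: [set I : {set T} | v \in I] &, injective (fun I : {set T} => I :\ v)}.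
  move=> I J; rewrite !inE => /andP[_ vI] /andP[_ vJ] e.
  by rewrite -(setD1K vI) -(setD1K vJ) e.
rewrite -(card_in_imset inj); apply: subset_leq_card; apply/subsetP => J /imsetP [I].
rewrite !inE => /andP[/andP[IV iI] vI] ->; rewrite (indep_sub (subsetDl _ _) iI) andbT.
apply/subsetP => x; rewrite !inE => /andP[xv xI]; rewrite xv (subsetP IV x xI) !andbT.
apply/negP => /eqP exu; rewrite exu in xI; move: xI => uI.
move/indepP: iI => iI.
case/orP: avu => a.
  by move: (iI _ _ vI uI); rewrite a.
by move: (iI _ _ uI vI); rewrite a.
Qed.

Lemma cnt_peel_triv (V : {set T}) v : cnt V <= cnt (V :\ v) + cnt (V :\ v).
Proof.
set A := [set I : {set T} | (I \subset V) && indep I].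
rewrite /cnt -/A -(cardsID [set I : {set T} | v \in I] A) addnC.
apply: leq_add.
  apply: subset_leq_card; apply/subsetP => I; rewrite !inE => /andP[vI /andP[IV iI]].
  rewrite iI andbT; apply/subsetP => x xI; rewrite !inE (subsetP IV x xI) andbT.
  by apply: contraNneq vI => <-.
have inj : {in A :&: [set I : {set T} | v \in I] &, injective (fun I : {set T} => I :\ v)}.
  move=> I J; rewrite !inE => /andP[_ vI] /andP[_ vJ] e.
  by rewrite -(setD1K vI) -(setD1K vJ) e.
rewrite -(card_in_imset inj); apply: subset_leq_card; apply/subsetP => J /imsetP [I].
rewrite !inE => /andP[/andP[IV iI] vI] ->; rewrite (indep_sub (subsetDl _ _) iI) andbT.
by apply/subsetP => x; rewrite !inE => /andP[xv xI]; rewrite xv (subsetP IV x xI).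
Qed.

Lemma cnt_loop (V : {set T}) v : adj v v -> cnt V <= cnt (V :\ v).
Proof.
move=> avv; apply: subset_leq_card; apply/subsetP => I; rewrite !inE => /andP[IV iI].
rewrite iI andbT; apply/subsetP => x xI; rewrite !inE (subsetP IV x xI) andbT.
apply: contraTneq xI => ->; apply/negP => vI.
by move/indepP: iI => /(_ v v vI vI); rewrite avv.
Qed.

End Gen.
Fixpoint fib (n : nat) : nat :=
  match n with 0 => 0 | 1 => 1 | S ((S k) as k1) => fib k1 + fib k end.

Section Path.
Variable T : finType.
Variable adj : rel T.
Variable x0 : T.

Definition pathlike (q : seq T) := forall i j, i < j -> j < size q ->
  adj (nth x0 q i) (nth x0 q j) || adj (nth x0 q j) (nth x0 q i) -> j = i.+1.
Definition consec (q : seq T) := forall i, i.+1 < size q ->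
  adj (nth x0 q i) (nth x0 q i.+1) || adj (nth x0 q i.+1) (nth x0 q i).

Lemma pathlike_cons v q : pathlike (v :: q) -> pathlike q.
Proof. by move=> H i j ij js a; have := H i.+1 j.+1 ij js a => -[]. Qed.
Lemma consec_cons v q : consec (v :: q) -> consec q.
Proof. by move=> H i js; exact: (H i.+1 js). Qed.

Lemma cnt_path q : uniq q -> pathlike q -> consec q ->
  cnt adj [set x in q] <= fib (size q).+2 /\
  (q != [::] -> adj (last x0 q) (last x0 q) -> cnt adj [set x in q] <= fib (size q).+1).
Proof.
have main : forall n q, size q < n -> uniq q -> pathlike q -> consec q ->
  cnt adj [set x in q] <= fib (size q).+2 /\
  (q != [::] -> adj (last x0 q) (last x0 q) -> cnt adj [set x in q] <= fib (size q).+1).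
  elim=> // n IH q0.
  case: q0 => [|v [|u r]] szq uq pq cq.
  - have -> : [set x in [::] : seq T] = set0 by apply/setP => x; rewrite !inE.
    by rewrite cnt0.
  - have e : [set x in [:: v]] :\ v = set0 by apply/setP => x; rewrite !inE; case: eqP.
    split.
      by apply: (leq_trans (cnt_peel_triv adj _ v)); rewrite e cnt0.
    by move=> _ /= avv; apply: (leq_trans (cnt_loop _ avv)); rewrite e cnt0.
  - have e1 : [set x in v :: u :: r] :\ v = [set x in u :: r].
      apply/setP => x; rewrite !inE; case: (eqVneq x v) => // ->.
      by move: uq => /= /andP[]; rewrite !inE => /norP[/negbTE -> /negbTE ->].
    have e2 : [set x in u :: r] :\ u = [set x in r].
      apply/setP => x; rewrite !inE; case: (eqVneq x u) => // ->.
      by move: uq => /= /and3P[_ /negbTE -> _].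
    have hp : cnt adj [set x in v :: u :: r] <= cnt adj [set x in u :: r] + cnt adj [set x in r].
      rewrite -e2 -e1; apply: cnt_peel; first by rewrite inE mem_head.
        by have := cq 0 isT.
      move=> w; rewrite inE => wq wv a.
      have := pq 0 (index w (v :: u :: r)).
      rewrite nth_index // => /(_ _ _ _) H.
      have i0 : 0 < index w (v :: u :: r) by rewrite /= eq_sym (negbTE wv).
      have := H i0; rewrite index_mem wq => /(_ isT); rewrite [nth x0 _ 0]/= a => /(_ isT) ei.
      by have := nth_index x0 wq; rewrite ei /= => <-.
    move: uq => /= /andP[_ uq'].
    have uq'' : uniq r by move: uq' => /= /andP[].
    have pq' := pathlike_cons pq; have pq'' := pathlike_cons pq'.
    have cq' := consec_cons cq; have cq'' := consec_cons cq'.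
    have s1 : size (u :: r) < n by move: szq => /=; lia.
    have s2 : size r < n by move: szq => /=; lia.
    have [A1 A2] := IH (u :: r) s1 uq' pq' cq'.
    have [B1 B2] := IH r s2 uq'' pq'' cq''.
    split.
      apply: (leq_trans hp).
      have E : fib (size r).+3 + fib (size r).+2 = fib (size [:: v, u & r]).+2 by [].
      by apply: leq_trans (leq_add A1 B1) _; rewrite E; exact: leqnn.
    move=> _ /= al; apply: (leq_trans hp).
    have := A2 isT al => A.
    case: r {s1 s2 A1 A2 B1 hp e1 e2 uq' uq'' pq' pq'' cq' cq'' szq pq cq} B2 A al => [|y s] B2 A al.
      have -> : [set x in [::] : seq T] = set0 by apply/setP => x; rewrite !inE.
      by rewrite cnt0 /=; rewrite addn1 in A *; rewrite addn1 ltnS.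
    have := B2 isT al => B.
    have E : fib (size (y :: s)).+2 + fib (size (y::s)).+1 = fib (size [:: v, u, y & s]).+1 by [].
    by apply: leq_trans (leq_add A B) _; rewrite E; exact: leqnn.
by move=> uq pq cq; apply: (main (size q).+1 q (ltnSn _)).
Qed.

End Path.

Section Closed.
Variable T : finType.
Variable adj : rel T.
Variables (a b : R) (Tp : {set T}).

Definition Wt (X : {set T}) : R := (a ^ #|X| * b ^ #|X :&: Tp|)%R.
Definition closedP (X : {set T}) := forall x y, x \in X -> adj x y || adj y x -> y \in X.

Lemma closed_bound (U0 : {set T}) : (0 <= a)%R -> (0 <= b)%R ->
  (forall x, x \in U0 -> exists P : {set T}, [/\ x \in P, closedP P,
      (forall V, closedP V -> x \in V -> P \subset V) & (INR (cnt adj P) <= Wt P)%R]) ->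
  forall V, closedP V -> V \subset U0 -> (INR (cnt adj V) <= Wt V)%R.
Proof.
move=> a0 b0 HP V; move: {-1}#|V|.+1 (ltnSn #|V|) => n; elim: n V => // n IH V szV cV VU.
case: (set_0Vmem V) => [->|[x xV]].
  by rewrite cnt0 /Wt set0I !cards0 /=; lra.
have [P [xP cP PV bP]] := HP x (subsetP VU x xV).
have sPV := PV V cV xV.
set V' := V :\: P.
have cV' : closedP V'.
  move=> y z; rewrite inE => /andP[yP yV] ayz; rewrite inE (cV y z yV ayz) andbT.
  apply: contra yP => zP; apply: (cP z y zP); by rewrite orbC.
have szV' : #|V'| < n.
  rewrite -ltnS; apply: leq_trans szV; rewrite ltnS; apply: proper_card.
  by apply/properP; split; [apply: subsetDl | exists x => //; rewrite inE xP].
have bV' := IH V' szV' cV' (subset_trans (subsetDl _ _) VU).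
have eV : V = P :|: V' by rewrite /V' -{1}(setID V P) (setIidPr sPV).
have sp : cnt adj V <= cnt adj P * cnt adj V'.
  rewrite {1}eV; apply: cnt_split; first by rewrite -setI_eq0 /V' setDE setICA setICr setI0.
  move=> y z yP; rewrite inE => /andP[zP _]; apply/andP; split; apply: contra zP => azy;
    apply: (cP y z yP); by rewrite azy ?orbT.
have dPV : P :&: V' = set0 by rewrite /V' setDE setICA setICr setI0.
have c1 : #|V| = #|P| + #|V'|.
  by rewrite -cardsUI dPV cards0 addn0 -eV.
have c2 : #|V :&: Tp| = #|P :&: Tp| + #|V' :&: Tp|.
  rewrite -cardsUI; have -> : (P :&: Tp) :&: (V' :&: Tp) = set0.
    by rewrite setIACA dPV set0I.
  by rewrite cards0 addn0 -setIUl -eV.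
have eW : Wt V = (Wt P * Wt V')%R by rewrite /Wt c1 c2 !pow_add; ring.
apply: (Rle_trans _ _ _ (le_INR _ _ (leP sp))).
rewrite mult_INR eW; apply: Rmult_le_compat => //; apply: pos_INR.
Qed.

End Closed.
Definition psi : R := ((1 - sqrt 5) / 2)%R.
Definition cc : R := (golden / Rpower 5 (1 / 4))%R.

Lemma sqrt5_sq : (sqrt 5 * sqrt 5 = 5)%R.
Proof. apply: sqrt_sqrt; lra. Qed.
Lemma sqrt5_pos : (2 < sqrt 5)%R.
Proof.
have h := sqrt5_sq; have h0 := sqrt_pos 5.
nra.
Qed.
Lemma sqrt5_lt3 : (sqrt 5 < 3)%R.
Proof. have h := sqrt5_sq; have h0 := sqrt_pos 5. nra. Qed.

Lemma golden_sq : (golden ^ 2 = golden + 1)%R.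
Proof. rewrite /golden; have h := sqrt5_sq; field_simplify; nra. Qed.
Lemma psi_sq : (psi ^ 2 = psi + 1)%R.
Proof. rewrite /psi; have h := sqrt5_sq; field_simplify; nra. Qed.
Lemma golden_gt1 : (1 < golden)%R.
Proof. rewrite /golden; have := sqrt5_pos; lra. Qed.

Lemma binet n : (INR (fib n) = (golden ^ n - psi ^ n) / sqrt 5)%R.
Proof.
have s5 := sqrt5_pos.
have H : forall n, (INR (fib n) = (golden ^ n - psi ^ n) / sqrt 5)%R /\
                   (INR (fib n.+1) = (golden ^ n.+1 - psi ^ n.+1) / sqrt 5)%R.
  elim=> [|k [IH1 IH2]].
    split; rewrite /= /golden /psi; field; lra.
  split => //.
  have -> : fib k.+2 = fib k.+1 + fib k by [].
  rewrite plus_INR IH1 IH2.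
  have e1 : (golden ^ k.+2 = golden ^ k.+1 + golden ^ k)%R.
    have h := golden_sq; rewrite /= Rmult_1_r in h; rewrite /= -Rmult_assoc h; ring.
  have e2 : (psi ^ k.+2 = psi ^ k.+1 + psi ^ k)%R.
    have h := psi_sq; rewrite /= Rmult_1_r in h; rewrite /= -Rmult_assoc h; ring.
  rewrite e1 e2; field; lra.
by case: (H n).
Qed.

Lemma fib_even j : (INR (fib (2 * j)) <= golden ^ (2 * j) / sqrt 5)%R.
Proof.
rewrite binet pow_mult (pow_mult psi).
have : (0 <= (psi ^ 2) ^ j)%R by apply: pow_le; rewrite psi_sq /psi; have := sqrt5_lt3; lra.
have := sqrt5_pos => s5 h.
apply: Rmult_le_compat_r; [apply: Rlt_le; apply: Rinv_0_lt_compat; lra| lra].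
Qed.

Lemma fib_le_pow j : (INR (fib j.+1) <= golden ^ j)%R.
Proof.
have g1 := golden_gt1.
have H : forall j, (INR (fib j.+1) <= golden ^ j)%R /\ (INR (fib j.+2) <= golden ^ j.+1)%R.
  elim=> [|k [IH1 IH2]]; first by split; rewrite /=; lra.
  split => //.
  have -> : fib k.+3 = fib k.+2 + fib k.+1 by [].
  rewrite plus_INR.
  have e1 : (golden ^ k.+2 = golden ^ k.+1 + golden ^ k)%R.
    have h := golden_sq; rewrite /= Rmult_1_r in h; rewrite /= -Rmult_assoc h; ring.
  rewrite e1; lra.
by case: (H j).
Qed.

Lemma Rp5_pos : (0 < Rpower 5 (1 / 4))%R.
Proof. apply: exp_pos. Qed.

Lemma Rp5_4 : (Rpower 5 (1 / 4) ^ 4 = 5)%R.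
Proof.
rewrite -Rpower_pow; last by apply: exp_pos.
rewrite Rpower_mult.
have -> : (1 / 4 * INR 4 = 1)%R by rewrite /=; field.
by rewrite Rpower_1 //; lra.
Qed.

Lemma cc_sq : (cc ^ 2 = golden ^ 2 / sqrt 5)%R.
Proof.
rewrite /cc.
have h : (Rpower 5 (1 / 4) ^ 2 = sqrt 5)%R.
  rewrite -Rpower_pow; last by apply: exp_pos.
  rewrite Rpower_mult -Rpower_sqrt; last lra.
  congr Rpower; rewrite /=; field.
have := Rp5_pos => hp.
by rewrite /Rdiv Rpow_mult_distr pow_inv h.
Qed.

Lemma golden4 : (golden ^ 4 = 3 * golden + 2)%R.
Proof.
have -> : (golden ^ 4 = (golden ^ 2) ^ 2)%R by rewrite -pow_mult.
have := golden_sq; rewrite /= => h; rewrite h; nra.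
Qed.

Lemma cc_ge1 : (1 <= cc)%R.
Proof.
rewrite /cc.
have hp := Rp5_pos.
have g1 := golden_gt1.
suff h : (Rpower 5 (1 / 4) <= golden)%R.
  apply/(Rmult_le_reg_r (Rpower 5 (1 / 4))) => //.
  rewrite Rmult_1_l /Rdiv Rmult_assoc Rinv_l; lra.
apply: Rnot_lt_le => h.
have := pow_incr golden (Rpower 5 (1 / 4)) 4 (conj (Rlt_le _ _ (Rlt_trans _ _ _ Rlt_0_1 g1)) (Rlt_le _ _ h)).
rewrite Rp5_4 golden4; lra.
Qed.

Lemma cc_pos : (0 < cc)%R.
Proof. have := cc_ge1; lra. Qed.

Lemma golden_cc_sqrt3 : (sqrt 3 <= golden * cc)%R.
Proof.
have hp : (0 <= golden * cc)%R by have := cc_ge1; have := golden_gt1; nra.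
rewrite -(sqrt_pow2 (golden * cc)) //; apply: sqrt_le_1_alt.
rewrite Rpow_mult_distr cc_sq.
have -> : (golden ^ 2 * (golden ^ 2 / sqrt 5) = golden ^ 4 / sqrt 5)%R.
  by rewrite /Rdiv -Rmult_assoc -pow_add.
rewrite golden4 /golden.
have s5 := sqrt5_pos; have s55 := sqrt5_sq.
apply/(Rmult_le_reg_r (sqrt 5)); first lra.
rewrite /Rdiv Rmult_assoc Rinv_l; last lra.
nra.
Qed.
Lemma box_card (d N : nat) (bnd : 'I_d -> nat) : (forall i, bnd i <= N) ->
  #|[set c : {ffun 'I_d -> 'I_N} | [forall i, c i < bnd i]]| = \prod_(i < d) bnd i.
Proof.
move=> hb.
have card_ltord : forall b, b <= N -> #|[pred j : 'I_N | j < b]| = b.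
  move=> b bN; rewrite -{2}(card_ord b).
  pose f := fun j : 'I_b => widen_ord bN j.
  have -> : #|[pred j : 'I_N | j < b]| = #|[set f j | j in 'I_b]|.
    apply: eq_card => j; rewrite inE /=; apply/idP/imsetP.
      by move=> hj; exists (Ordinal hj) => //; apply/val_inj.
    by move=> [k _ ->]; rewrite /= ltn_ord.
  by rewrite card_imset // => x y /(congr1 val) /= /val_inj.
have E := (@card_family 'I_d (fun _ => 'I_N) (fun i => [pred j : 'I_N | j < bnd i])).
rewrite foldrE big_map big_enum /= in E.
rewrite (eq_bigr (fun i => #|[pred j : 'I_N | j < bnd i]|)); last by move=> i _; rewrite card_ltord.
rewrite -E cardsE; apply: eq_card => c; rewrite inE; apply/forallP/familyP => H i; move: (H i); rewrite inE //.
Qed.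

Lemma prod_ge (c : R) (d : nat) (u v : 'I_d -> nat) : (0 <= c)%R ->
  (forall i, c * INR (u i) <= INR (v i))%R ->
  (c ^ d * INR (\prod_(i < d) u i) <= INR (\prod_(i < d) v i))%R.
Proof.
move=> c0; elim: d u v => [|d IH] u v h.
  by rewrite !big_ord0 /=; lra.
rewrite !big_ord_recr /= !mult_INR.
have := IH (fun i => u (widen_ord (leqnSn d) i)) (fun i => v (widen_ord (leqnSn d) i)) (fun i => h _).
have := h ord_max.
have := pos_INR (u ord_max); have := pos_INR (\prod_(i < d) u (widen_ord (leqnSn d) i)).
have : (0 <= c ^ d)%R by apply: pow_le.
move=> h1 h2 h3 h4 h5.
have -> : (c * c ^ d * (INR (\prod_(i < d) u (widen_ord (leqnSn d) i)) * INR (u ord_max)) =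
   (c ^ d * INR (\prod_(i < d) u (widen_ord (leqnSn d) i))) * (c * INR (u ord_max)))%R by ring.
apply: Rmult_le_compat => //; [apply: Rmult_le_pos | apply: Rmult_le_pos] => //.
Qed.

Lemma ceil_ex (a : R) : (0 <= a)%R -> exists k : nat, (a <= INR k < a + 1)%R.
Proof.
move=> a0.
have [h1 h2] := archimed a.
have u0 : (0 <= up a)%Z by apply: le_IZR; lra.
have e : INR (Z.to_nat (up a)) = IZR (up a) by rewrite INR_IZR_INZ Znat.Z2Nat.id.
case: (Rlt_le_dec (IZR (up a)) (a + 1)) => h.
  by exists (Z.to_nat (up a)); rewrite e; lra.
have ea : IZR (up a) = (a + 1)%R by lra.
exists (Z.to_nat (up a)).-1.
have p : (0 < Z.to_nat (up a))%N.
  apply/ltP; apply: INR_lt; rewrite e; simpl; lra.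
rewrite -(prednK p) in e; rewrite S_INR in e; lra.
Qed.

Lemma exists_subset (T : finType) (A : {set T}) x k : x \in A -> 0 < k -> k <= #|A| ->
  exists L : {set T}, [/\ L \subset A, x \in L & #|L| = k].
Proof.
move=> xA; elim: k => [//|k IH] _ kA.
case: k IH kA => [_ _|k IH kA].
  by exists [set x]; rewrite sub1set xA inE eqxx cards1.
have [L [LA xL cL]] := IH isT (ltnW kA).
have : 0 < #|A :\: L| by rewrite cardsDS // cL subn_gt0.
case/card_gt0P => y; rewrite inE => /andP[yL yA].
exists (y |: L); split.
- by rewrite subUset sub1set yA.
- by rewrite inE xL orbT.
- by rewrite cardsU1 yL cL.
Qed.

Lemma sum_bound (T : finType) (A : {pred T}) (f : T -> nat) (X : R) :
  (forall l, l \in A -> INR (f l) <= X)%R ->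
  (INR (\sum_(l in A) f l) <= INR #|A| * X)%R.
Proof.
move=> h; rewrite -sum1_card.
apply: (big_rec2 (fun s t : nat => (INR s <= INR t * X)%R)); first by rewrite /=; lra.
by move=> i s t iA hst; rewrite !plus_INR /=; have := h i iA; lra.
Qed.

Lemma pow_le_self (x : R) (d : nat) : (0 <= x <= 1)%R -> (x ^ d.+1 <= x)%R.
Proof.
move=> [x0 x1]; rewrite /=.
have : (x ^ d <= 1)%R by rewrite -(pow1 d); apply: pow_incr; lra.
move=> h; have := pow_le x d x0; nra.
Qed.

Lemma r_ge_e (eps : R) (d : nat) : (0 < eps < 1)%R -> (0 < d)%N ->
  (eps ^ d <= 1 - (1 - eps) ^ d)%R.
Proof.
move=> [e0 e1]; case: d => // d _.
have := pow_le_self d (conj (Rlt_le _ _ e0) (Rlt_le _ _ e1)).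
have : (0 <= 1 - eps <= 1)%R by lra.
move/(pow_le_self d); lra.
Qed.
Lemma sqrt3_ge1 : (1 <= sqrt 3)%R.
Proof. rewrite -sqrt_1; apply: sqrt_le_1_alt; lra. Qed.
Lemma sqrt3_pos : (0 < sqrt 3)%R.
Proof. have := sqrt3_ge1; lra. Qed.

Lemma partA (N k : nat) (e : R) : (2 * k <= N)%N -> (e * INR N <= INR k)%R ->
  (sqrt 3 ^ (N - 2 * k) <= Rpower (sqrt 3) ((1 - 2 * e) * INR N))%R.
Proof.
move=> hk he; rewrite -Rpower_pow; last exact: sqrt3_pos.
apply: Rle_Rpower; first exact: sqrt3_ge1.
rewrite minus_INR; last by apply/leP.
rewrite mult_INR /=; lra.
Qed.

Lemma partB (N k : nat) (e r : R) : (0 < k)%N -> (INR k < e * INR N + 1)%R ->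
  (INR (k.-1) * (golden ^ N * Rpower cc (r * INR N)) <=
   e * INR N * Rpower golden (INR N) * Rpower cc (r * INR N))%R.
Proof.
move=> k0 hk.
have g0 : (0 < golden)%R by have := golden_gt1; lra.
rewrite -(@Rpower_pow N golden g0).
have hX : (0 <= Rpower golden (INR N) * Rpower cc (r * INR N))%R.
  by apply: Rmult_le_pos; apply: Rlt_le; apply: exp_pos.
have : (INR k.-1 <= e * INR N)%R.
  by rewrite -(prednK k0) S_INR in hk; lra.
move=> h.
have -> : (e * INR N * Rpower golden (INR N) * Rpower cc (r * INR N) =
  e * INR N * (Rpower golden (INR N) * Rpower cc (r * INR N)))%R by ring.
by apply: Rmult_le_compat_r.
Qed.

Lemma cc_pow_le (j : nat) (t : R) : (INR j <= t)%R -> (cc ^ j <= Rpower cc t)%R.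
Proof.
move=> h; rewrite -Rpower_pow; last exact: cc_pos.
by apply: Rle_Rpower => //; apply: cc_ge1.
Qed.

Lemma special (N : nat) (e r : R) : (2 <= N)%N -> (INR N - 1 < e * INR N)%R -> (e <= r)%R ->
  (0 <= e)%R ->
  (sqrt 3 ^ (N - 2) <= Rpower (sqrt 3) ((1 - 2 * e) * INR N) +
     e * INR N * Rpower golden (INR N) * Rpower cc (r * INR N))%R.
Proof.
move=> N2 he er e0.
have P1 : (0 < Rpower (sqrt 3) ((1 - 2 * e) * INR N))%R by apply: exp_pos.
have g1 := golden_gt1; have c1 := cc_ge1; have s1 := sqrt3_ge1.
have g0 : (0 < golden)%R by lra.
rewrite (@Rpower_pow N golden g0).
case: N N2 he P1 => [//|M] N2 he P1.
have M1 : (1 <= INR M)%R by apply: (le_INR 1); apply/leP.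
have hc : (cc ^ M <= Rpower cc (r * INR M.+1))%R.
  apply: cc_pow_le; rewrite S_INR in he *.
  have : (e * (INR M + 1) <= r * (INR M + 1))%R.
    by apply: Rmult_le_compat_r => //; lra.
  lra.
have key : (sqrt 3 ^ (M.+1 - 2) <= golden ^ M.+1 * cc ^ M)%R.
  have -> : (golden ^ M.+1 * cc ^ M = golden * (golden * cc) ^ M)%R.
    by rewrite Rpow_mult_distr /=; ring.
  apply: Rle_trans (_ : sqrt 3 ^ M <= _)%R.
    by apply: Rle_pow => //; apply/leP; lia.
  rewrite -{1}(Rmult_1_l (sqrt 3 ^ M)); apply: Rmult_le_compat; try lra.
    by apply: pow_le; lra.
  apply: pow_incr; split; [lra | exact: golden_cc_sqrt3].
have hg : (0 <= golden ^ M.+1)%R by apply: pow_le; lra.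
have hcc : (0 <= cc ^ M)%R by apply: pow_le; lra.
have : (golden ^ M.+1 * cc ^ M <= e * INR M.+1 * golden ^ M.+1 * Rpower cc (r * INR M.+1))%R.
  have eN : (1 <= e * INR M.+1)%R by rewrite S_INR in he *; lra.
  have -> : (e * INR M.+1 * golden ^ M.+1 * Rpower cc (r * INR M.+1) =
     e * INR M.+1 * (golden ^ M.+1 * Rpower cc (r * INR M.+1)))%R by ring.
  rewrite -{1}(Rmult_1_l (golden ^ M.+1 * cc ^ M)).
  apply: Rmult_le_compat; try lra.
    by apply: Rmult_le_pos.
  by apply: Rmult_le_compat_l.
lra.
Qed.
Lemma max_spec (N : nat) (P : pred nat) : P 0 -> 0 < N -> (forall j, P j -> j < N) ->
  P (\max_(j < N | P j) j) /\ (forall j, P j -> j <= \max_(j < N | P j) j).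
Proof.
move=> P0 N0 PN; split; last first.
  by move=> j Pj; have := @leq_bigmax_cond _ (fun k : 'I_N => P k) (fun k : 'I_N => nat_of_ord k) (Ordinal (PN j Pj)) Pj.
have A0 : 0 < #|[pred j : 'I_N | P j]|.
  by apply/card_gt0P; exists (Ordinal N0); rewrite inE.
have [i0 Pi0 e] := eq_bigmax_cond (fun k : 'I_N => nat_of_ord k) A0.
by rewrite (eq_bigl (fun j : 'I_N => j \in [pred j : 'I_N | P j])) // e; rewrite inE in Pi0.
Qed.

Section Geo.
Variable d : nat.
Variable F : pt d.

Lemma F_le_max i : F i <= maxF F.
Proof. rewrite /maxF; exact: (@leq_bigmax _ (fun j : 'I_d => F j) i). Qed.

Definition mk (p : pt d) : cube F := [ffun i => inord (p i)].
Lemma mkE (p : pt d) i : p i <= F i -> (mk p) i = p i :> nat.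
Proof. by move=> h; rewrite ffunE inordK // ltnS (leq_trans h (F_le_max i)). Qed.
Lemma cube_eqP (c c' : cube F) : (forall i, c i = c' i :> nat) -> c = c'.
Proof. by move=> h; apply/ffunP => i; apply/val_inj; apply: h. Qed.

Definition Bx : {set cube F} := [set c : cube F | [forall i, c i <= F i]].
Lemma inBx (c : cube F) : (c \in Bx) = [forall i, c i <= F i].
Proof. by rewrite inE. Qed.

Definition adjS : rel (cube F) := fun c c' => [forall i, c i + c' i == F i].
Definition adjT (m : pt d) : rel (cube F) := fun c c' => [forall i, c i + c' i + m i == F i].
Definition adjST (m : pt d) : rel (cube F) := fun c c' => adjS c c' || adjT m c c'.

Lemma adjS_sym (c c' : cube F) : adjS c c' = adjS c' c.
Proof. by apply/forallP/forallP => h i; rewrite addnC; apply: h. Qed.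
Lemma adjT_sym m (c c' : cube F) : adjT m c c' = adjT m c' c.
Proof. by apply/forallP/forallP => h i; have := h i; rewrite [X in X + m i]addnC. Qed.
Lemma adjST_sym m (c c' : cube F) : adjST m c c' = adjST m c' c.
Proof. by rewrite /adjST adjS_sym adjT_sym. Qed.

Section Line.
Variable m : pt d.
Variable i0 : 'I_d.
Hypothesis mi0 : 0 < m i0.
Variable x : cube F.
Hypothesis xB : x \in Bx.

Let N := (maxF F).+1.
Let xle i : x i <= F i.
Proof. by move: xB; rewrite inBx => /forallP. Qed.

Definition Plv (j : nat) := [forall i, j * m i <= x i].
Definition lvl := \max_(j < N | Plv j) j.

Lemma lvl_spec : Plv lvl /\ (forall j, Plv j -> j <= lvl).
Proof.
apply: max_spec => //.
  by apply/forallP => i; rewrite mul0n.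
move=> j /forallP /(_ i0) h; rewrite ltnS.
apply: leq_trans (F_le_max i0); apply: leq_trans (xle i0); apply: leq_trans h.
by rewrite leq_pmulr.
Qed.

Definition bb (i : 'I_d) := x i - lvl * m i.

Lemma bb_le i : bb i <= F i.
Proof. by rewrite /bb; apply: leq_trans (leq_subr _ _) (xle i). Qed.

Lemma bb_x i : bb i + lvl * m i = x i.
Proof. by rewrite /bb subnK //; case: lvl_spec => /forallP. Qed.

Lemma bb_notge : ~~ [forall i, m i <= bb i].
Proof.
apply/negP => /forallP h.
have : Plv lvl.+1.
  apply/forallP => i; rewrite mulSn -(bb_x i) leq_add2r; exact: h.
by case: lvl_spec => _ /(_ _ _) H /H; rewrite ltnn.
Qed.

Definition Ptop (j : nat) := [forall i, bb i + j * m i <= F i].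
Definition top := \max_(j < N | Ptop j) j.

Lemma top_spec : Ptop top /\ (forall j, Ptop j -> j <= top).
Proof.
apply: max_spec => //.
  by apply/forallP => i; rewrite mul0n addn0 bb_le.
move=> j /forallP /(_ i0) h; rewrite ltnS.
apply: leq_trans (F_le_max i0); apply: leq_trans h.
by apply: leq_trans (leq_pmulr _ mi0) (leq_addl _ _).
Qed.

Lemma lvl_le_top : lvl <= top.
Proof.
case: top_spec => _; apply; apply/forallP => i; rewrite bb_x; exact: xle.
Qed.

Lemma Ptop_le j i : j <= top -> bb i + j * m i <= F i.
Proof.
move=> jt; case: top_spec => /forallP /(_ i) h _; apply: leq_trans h.
by rewrite leq_add2l leq_mul2r jt orbT.
Qed.

Definition yv (j : nat) := mk (fun i => bb i + j * m i).
Definition zv (j : nat) := mk (fun i => F i - (bb i + j * m i)).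

Lemma yvE j i : j <= top -> yv j i = bb i + j * m i :> nat.
Proof. by move=> jt; rewrite mkE // Ptop_le. Qed.
Lemma zvE j i : j <= top -> zv j i = F i - (bb i + j * m i) :> nat.
Proof. by move=> jt; rewrite mkE // leq_subr. Qed.

Definition wv (a : nat) := if odd a then yv a./2 else zv a./2.
Lemma wv_even j : wv j.*2 = zv j.
Proof. by rewrite /wv odd_double doubleK. Qed.
Lemma wv_odd j : wv j.*2.+1 = yv j.
Proof. by rewrite /wv /= odd_double /= uphalf_double. Qed.

Definition Mlen := top.+1.*2.
Definition folded := zv 0 == yv top.
Definition Klen := if folded then top.+1 else Mlen.

Lemma parity_cases a : (exists j, a = j.*2) \/ (exists j, a = j.*2.+1).
Proof. by have := odd_double_half a; case: (odd a) => /= <-; [right|left]; exists a./2. Qed.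

Lemma adjS_E (c c' : cube F) : adjS c c' -> forall i, c i + c' i = F i.
Proof. by move/forallP => h i; apply/eqP. Qed.
Lemma adjT_E (c c' : cube F) : adjT m c c' -> forall i, c i + c' i + m i = F i.
Proof. by move/forallP => h i; apply/eqP. Qed.

Lemma wv_adj a c : a < Mlen -> adjST m (wv a) c ->
  (0 < a /\ c = wv a.-1) \/ (a.+1 < Mlen /\ c = wv a.+1).
Proof.
rewrite /Mlen => aM.
case: (parity_cases a) => [[j ej]|[j ej]]; subst a.
- have jt : j <= top by move: aM; lia.
  rewrite wv_even => /orP[/adjS_E h|/adjT_E h].
  + right; split; first by lia.
    rewrite wv_odd; apply: cube_eqP => i; rewrite yvE //.
    have := h i; rewrite zvE // => h'; have := Ptop_le i jt; lia.
  + case: j jt h {aM} => [|j] jt h.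
      exfalso; move/negP: bb_notge; apply; apply/forallP => i.
      have := h i; rewrite zvE // mul0n addn0 => h'; have := bb_le i; lia.
    left; split; first by lia.
    have -> : j.+1.*2.-1 = j.*2.+1 by lia.
    rewrite wv_odd; apply: cube_eqP => i; rewrite yvE; last by lia.
    have := h i; rewrite zvE // mulSn => h'; have := Ptop_le i jt; rewrite mulSn; lia.
- have jt : j <= top by move: aM; lia.
  rewrite wv_odd => /orP[/adjS_E h|/adjT_E h].
  + left; split; first by lia.
    rewrite /= wv_even; apply: cube_eqP => i; rewrite zvE //.
    have := h i; rewrite yvE // => h'; lia.
  + have jt' : j.+1 <= top.
      case: top_spec => _; apply; apply/forallP => i; have := h i; rewrite yvE // mulSn; lia.
    right; split; first by lia.
    have -> : j.*2.+2 = j.+1.*2 by lia.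
    rewrite wv_even; apply: cube_eqP => i; rewrite zvE //.
    have := h i; rewrite yvE // mulSn => h'; lia.
Qed.

Lemma wv_consec a : a.+1 < Mlen -> adjST m (wv a) (wv a.+1).
Proof.
rewrite /Mlen => aM.
case: (parity_cases a) => [[j ej]|[j ej]]; subst a.
- have jt : j <= top by move: aM; lia.
  rewrite wv_even wv_odd; apply/orP; left; apply/forallP => i.
  rewrite zvE // yvE //; have := Ptop_le i jt => h; apply/eqP; lia.
- have jt : j.+1 <= top by move: aM; lia.
  have -> : j.*2.+2 = j.+1.*2 by lia.
  rewrite wv_even wv_odd; apply/orP; right; apply/forallP => i.
  rewrite zvE // yvE; last by lia.
  have := Ptop_le i jt; rewrite mulSn => h; apply/eqP; lia.
Qed.

Lemma yv_inj j j' : j <= top -> j' <= top -> yv j = yv j' -> j = j'.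
Proof.
move=> jt jt' e; have := congr1 (fun c : cube F => nat_of_ord (c i0)) e.
rewrite /= yvE // yvE // => /eqP; rewrite eqn_add2l eqn_pmul2r // => /eqP //.
Qed.

Lemma zv_inj j j' : j <= top -> j' <= top -> zv j = zv j' -> j = j'.
Proof.
move=> jt jt' e; have := congr1 (fun c : cube F => nat_of_ord (c i0)) e.
rewrite /= zvE // zvE // => h.
have h1 := Ptop_le i0 jt; have h2 := Ptop_le i0 jt'.
have : j * m i0 = j' * m i0 by lia.
by move/eqP; rewrite eqn_pmul2r // => /eqP.
Qed.

Lemma zv_yv_fold j j' : j <= top -> j' <= top -> zv j = yv j' -> folded.
Proof.
move=> jt jt' e.
have h : forall i, F i - bb i = bb i + (j + j') * m i.
  move=> i; have := congr1 (fun c : cube F => nat_of_ord (c i)) e.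
  rewrite /= zvE // yvE // mulnDl => h; have := Ptop_le i jt; lia.
have st : j + j' <= top.
  case: top_spec => _; apply; apply/forallP => i; rewrite -h; exact: leq_subr.
have st' : top <= j + j'.
  case: (ltnP (j + j') top) => // lt.
  exfalso; move/negP: bb_notge; apply; apply/forallP => i.
  have := Ptop_le i lt; rewrite mulSn => h1; have := h i; have := bb_le i; lia.
have ej : j + j' = top by apply/eqP; rewrite eqn_leq st st'.
apply/eqP; apply: cube_eqP => i; rewrite zvE // yvE // -ej -h; lia.
Qed.

Lemma fold_E : folded -> forall j, j <= top -> zv j = yv (top - j).
Proof.
move=> /eqP e j jt.
have h : forall i, F i - bb i = bb i + top * m i.
  move=> i; have := congr1 (fun c : cube F => nat_of_ord (c i)) e.
  by rewrite /= zvE // yvE // mul0n addn0.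
apply: cube_eqP => i; rewrite zvE // yvE; last by lia.
rewrite mulnBl; have := h i; have := Ptop_le i jt; have := bb_le i.
have : j * m i <= top * m i by rewrite leq_mul2r jt orbT.
lia.
Qed.

Lemma Klen_le : Klen <= Mlen.
Proof. by rewrite /Klen /Mlen; case: folded => //; lia. Qed.
Lemma Klen_gt0 : 0 < Klen.
Proof. by rewrite /Klen /Mlen; case: folded => //; lia. Qed.

Lemma wv_inj a a' : a < Klen -> a' < Klen -> wv a = wv a' -> a = a'.
Proof.
rewrite /Klen /Mlen; case fo: folded => aK a'K.
- case: (parity_cases a) => [[j ej]|[j ej]]; case: (parity_cases a') => [[j' ej']|[j' ej']]; subst a a'.
  + by rewrite !wv_even => /zv_inj; move=> /(_ _ _) -> //; lia.
  + rewrite wv_even wv_odd (fold_E fo); last by lia.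
    by move=> /yv_inj; move=> /(_ _ _) e; exfalso; have := e ltac:(lia) ltac:(lia); lia.
  + rewrite wv_even wv_odd (fold_E fo); last by lia.
    by move=> /esym /yv_inj; move=> /(_ _ _) e; exfalso; have := e ltac:(lia) ltac:(lia); lia.
  + by rewrite !wv_odd => /yv_inj; move=> /(_ _ _) -> //; lia.
- case: (parity_cases a) => [[j ej]|[j ej]]; case: (parity_cases a') => [[j' ej']|[j' ej']]; subst a a'.
  + by rewrite !wv_even => /zv_inj; move=> /(_ _ _) -> //; lia.
  + rewrite wv_even wv_odd => /zv_yv_fold; rewrite fo => /(_ _ _) h; exfalso.
    by have := h ltac:(lia) ltac:(lia).
  + rewrite wv_even wv_odd => /esym /zv_yv_fold; rewrite fo => /(_ _ _) h; exfalso.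
    by have := h ltac:(lia) ltac:(lia).
  + by rewrite !wv_odd => /yv_inj; move=> /(_ _ _) -> //; lia.
Qed.

Lemma wv_fold_end : Klen < Mlen -> wv Klen = wv Klen.-1.
Proof.
rewrite /Klen /Mlen; case fo: folded; last by rewrite ltnn.
move=> _ /=.
case: (parity_cases top) => [[t et]|[t et]].
- rewrite {1}et wv_odd et wv_even (fold_E fo); last by lia.
  congr yv; lia.
- rewrite {2}et wv_odd.
  have -> : top.+1 = t.+1.*2 by lia.
  rewrite wv_even (fold_E fo); last by lia.
  congr yv; lia.
Qed.

Lemma x_yv : x = yv lvl.
Proof.
apply: cube_eqP => i; rewrite yvE ?lvl_le_top // bb_x //.
Qed.

Lemma x_in_w : exists2 a, a < Klen & wv a = x.
Proof.
have lt := lvl_le_top.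
rewrite /Klen /Mlen; case fo: folded.
- case: (ltnP lvl.*2 top) => h.
    by exists lvl.*2.+1; [lia | rewrite wv_odd x_yv].
  exists (top - lvl).*2; first by lia.
  rewrite wv_even (fold_E fo); last by lia.
  by rewrite x_yv; congr yv; lia.
- by exists lvl.*2.+1; [lia | rewrite wv_odd x_yv].
Qed.

Definition Tp : {set cube F} := [set c : cube F | ~~ [forall i, c i + m i <= F i]].

Lemma zv0_Tp : zv 0 \in Tp.
Proof.
rewrite inE; apply/negP => /forallP h; move/negP: bb_notge; apply; apply/forallP => i.
have := h i; rewrite zvE // mul0n addn0; have := bb_le i; lia.
Qed.

Lemma yvtop_Tp : yv top \in Tp.
Proof.
rewrite inE; apply/negP => /forallP h.
have : top.+1 <= top.
  case: top_spec => _; apply; apply/forallP => i; have := h i; rewrite yvE // mulSn; lia.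
by rewrite ltnn.
Qed.
Definition qseq := [seq wv a | a <- iota 0 Klen].

Lemma qseq_uniq : uniq qseq.
Proof.
rewrite map_inj_in_uniq ?iota_uniq // => a a'; rewrite !mem_iota /= !add0n => ha ha'.
exact: wv_inj.
Qed.

Lemma qseq_nth a : a < Klen -> nth x qseq a = wv a.
Proof. by move=> h; rewrite (nth_map 0) ?size_iota // nth_iota. Qed.

Lemma size_qseq : size qseq = Klen.
Proof. by rewrite size_map size_iota. Qed.

Lemma inqP c : reflect (exists2 a, a < Klen & wv a = c) (c \in qseq).
Proof.
apply: (iffP mapP) => [[a]|[a h <-]].
  by rewrite mem_iota add0n => /andP[_ h] ->; exists a.
by exists a => //; rewrite mem_iota add0n h.
Qed.

Lemma wv_in_q a : a < Klen -> wv a \in qseq.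
Proof. by move=> h; apply/inqP; exists a. Qed.

Definition PB := [set c in qseq].

Lemma PB_closed : closedP (adjST m) PB.
Proof.
move=> c y; rewrite inE => /inqP [a aK <-].
rewrite (adjST_sym m y) orbb => h; rewrite inE.
have aM : a < Mlen by apply: leq_trans aK Klen_le.
case: (wv_adj aM h) => [[a0 ->]|[a1 ->]].
  by apply: wv_in_q; apply: leq_ltn_trans aK; apply: leq_pred.
case: (ltnP a.+1 Klen) => h1; first exact: wv_in_q.
have eK : Klen = a.+1 by apply/eqP; rewrite eqn_leq h1 aK.
have := wv_fold_end; rewrite eK => -> //; exact: wv_in_q.
Qed.

Lemma PB_conn V : closedP (adjST m) V -> x \in V -> PB \subset V.
Proof.
move=> cV xV; have [a0 a0K ea0] := x_in_w.
have up : forall k, a0 + k < Klen -> wv (a0 + k) \in V.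
  elim=> [|k IH] h; first by rewrite addn0 ea0.
  have h' : a0 + k < Klen by apply: leq_trans h; rewrite addnS.
  apply: (cV _ _ (IH h')); rewrite addnS wv_consec //.
  by apply: leq_trans Klen_le; rewrite -addnS.
have down : forall k, k <= a0 -> wv (a0 - k) \in V.
  elim=> [|k IH] h; first by rewrite subn0 ea0.
  have h' : k <= a0 by apply: leq_trans h.
  apply: (cV _ _ (IH h')).
  have -> : a0 - k = (a0 - k.+1).+1 by rewrite subnS prednK // subn_gt0.
  rewrite wv_consec ?orbT //.
  by have := Klen_le; lia.
apply/subsetP => c; rewrite inE => /inqP [a aK <-].
case: (leqP a0 a) => h.
  by have := up (a - a0); rewrite subnKC //; apply.
by have := down (a0 - a); rewrite subKn ?(ltnW h) //; apply; rewrite leq_subr.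
Qed.

Lemma card_PB : #|PB| = Klen.
Proof. by rewrite cardsE; move/card_uniqP: qseq_uniq => ->; rewrite size_qseq. Qed.

Lemma PB_pathlike : pathlike (adjST m) x qseq.
Proof.
move=> i j ij; rewrite size_qseq => jK.
have iK : i < Klen by apply: ltn_trans jK.
rewrite !qseq_nth // (adjST_sym m (wv j)) orbb => h.
have iM : i < Mlen by apply: leq_trans iK Klen_le.
case: (wv_adj iM h) => [[i0' e]|[i1 e]].
  have := wv_inj jK (leq_ltn_trans (leq_pred _) iK) e => ej.
  by move: ij; rewrite ej; case: (i) i0' => // k _; rewrite ltnNge leqnSn.
case: (ltnP i.+1 Klen) => h1; first by exact: (wv_inj jK h1 e).
have eK : Klen = i.+1 by apply/eqP; rewrite eqn_leq h1 iK.
have := wv_fold_end; rewrite eK /= => /(_ _) e2.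
have e3 : wv j = wv i by rewrite e e2 // -eK; apply: leq_trans i1 _; rewrite eK.
by have := wv_inj jK iK e3 => ej; move: ij; rewrite ej ltnn.
Qed.

Lemma PB_consec : consec (adjST m) x qseq.
Proof.
move=> i; rewrite size_qseq => h.
rewrite !qseq_nth //; last exact: ltn_trans h.
by rewrite wv_consec // (leq_trans h Klen_le).
Qed.
Lemma PB_bound : (INR (cnt (adjST m) PB) <= Wt golden cc Tp PB)%R.
Proof.
have [c1 c2] := cnt_path (adj := adjST m) (x0 := x) qseq_uniq PB_pathlike PB_consec.
rewrite -/PB size_qseq in c1 c2.
rewrite /Wt card_PB.
have hc := cc_ge1; have g1 := golden_gt1.
have gK : (0 <= golden ^ Klen)%R by apply: pow_le; lra.
have ck : (1 <= cc ^ #|PB :&: Tp|)%R by apply: pow_R1_Rle.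
case fo: folded.
- have KM : Klen < Mlen.
    by rewrite /Klen fo /Mlen; move: (top) => t; rewrite -addnn; lia.
  have K0 := Klen_gt0.
  have ql : last x qseq = wv Klen.-1.
    by rewrite -nth_last size_qseq qseq_nth // prednK.
  have loop : adjST m (last x qseq) (last x qseq).
    rewrite ql; have := wv_consec (a := Klen.-1); rewrite prednK // (wv_fold_end KM) => H.
    exact: H.
  have c3 := c2 ltac:(by apply/eqP => e; move: (size_qseq); rewrite e /=; lia) loop.
  apply: Rle_trans (le_INR _ _ (leP c3)) _.
  apply: Rle_trans (fib_le_pow _) _.
  by rewrite -{1}(Rmult_1_r (golden ^ Klen)); apply: Rmult_le_compat_l.
- have KM : Klen = Mlen by rewrite /Klen fo.
  rewrite KM in c1 *.
  apply: Rle_trans (le_INR _ _ (leP c1)) _.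
  have -> : Mlen.+2 = 2 * top.+2 by rewrite /Mlen; lia.
  apply: Rle_trans (fib_even _) _.
  have -> : (golden ^ (2 * top.+2) / sqrt 5 = golden ^ Mlen * cc ^ 2)%R.
    rewrite cc_sq /Rdiv -Rmult_assoc -pow_add; congr (golden ^ _ * _)%R; rewrite /Mlen; lia.
  apply: Rmult_le_compat_l; first by apply: pow_le; lra.
  apply: Rle_pow => //; apply/leP.
  have sub : [set zv 0; yv top] \subset PB :&: Tp.
    apply/subsetP => c; rewrite in_set2 => /orP[/eqP ->|/eqP ->]; rewrite in_setI.
      rewrite zv0_Tp andbT inE; have := wv_in_q (a := 0); rewrite KM /Mlen /= => H.
      by apply: H.
    rewrite yvtop_Tp andbT inE; have := wv_in_q (a := top.*2.+1); rewrite wv_odd KM /Mlen => H.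
    by apply: H; lia.
  have := subset_leq_card sub; rewrite cards2.
  by move/negbT: fo; rewrite /folded => ->.
Qed.

Lemma block_B : exists P : {set cube F}, [/\ x \in P, closedP (adjST m) P,
      (forall V, closedP (adjST m) V -> x \in V -> P \subset V) &
      (INR (cnt (adjST m) P) <= Wt golden cc Tp P)%R].
Proof.
exists PB; split.
- by rewrite inE; have [a aK <-] := x_in_w; apply: wv_in_q.
- exact: PB_closed.
- exact: PB_conn.
- exact: PB_bound.
Qed.
End Line.
Lemma adjST_Bx m (c y : cube F) : adjST m c y -> y \in Bx.
Proof.
rewrite inBx => /orP[/adjS_E h|/adjT_E h]; apply/forallP => i; have := h i; lia.
Qed.

Lemma Bx_closed m : closedP (adjST m) Bx.
Proof.
move=> c y _ /orP[h|h]; first exact: adjST_Bx h.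
rewrite adjST_sym in h; exact: adjST_Bx h.
Qed.

Theorem countB m i0 : 0 < m i0 ->
  (INR (cnt (adjST m) Bx) <= golden ^ #|Bx| * cc ^ #|Bx :&: Tp m|)%R.
Proof.
move=> mi0.
have := @closed_bound _ (adjST m) golden cc (Tp m) Bx.
have g1 := golden_gt1; have c1 := cc_ge1.
move=> /(_ ltac:(lra) ltac:(lra)) H.
apply: H; [|exact: Bx_closed|exact: subxx].
move=> x xB; exact: (block_B mi0 xB).
Qed.

Definition sgm (c : cube F) := mk (fun i => F i - c i).
Lemma sgmE c i : sgm c i = F i - c i :> nat.
Proof. by rewrite mkE // leq_subr. Qed.
Lemma sgm_Bx c : sgm c \in Bx.
Proof. by rewrite inBx; apply/forallP => i; rewrite sgmE leq_subr. Qed.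
Lemma sgm_inv c : c \in Bx -> sgm (sgm c) = c.
Proof.
rewrite inBx => /forallP h; apply: cube_eqP => i; rewrite !sgmE; have := h i; lia.
Qed.
Lemma adjS_sig c y : adjS c y -> y = sgm c.
Proof. move/adjS_E => h; apply: cube_eqP => i; rewrite sgmE; have := h i; lia. Qed.
Lemma adjS_sig' c : c \in Bx -> adjS c (sgm c).
Proof.
rewrite inBx => /forallP h; apply/forallP => i; rewrite sgmE; have := h i => h'; apply/eqP; lia.
Qed.
Lemma sgm_inj : {in Bx &, injective sgm}.
Proof. by move=> c c' cB c'B e; rewrite -(sgm_inv cB) -(sgm_inv c'B) e. Qed.

Lemma sqrt3_sq : (sqrt 3 ^ 2 = 3)%R.
Proof. by rewrite /= Rmult_1_r sqrt_sqrt //; lra. Qed.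

Theorem countA (V : {set cube F}) : closedP adjS V -> V \subset Bx ->
  (INR (cnt adjS V) <= sqrt 3 ^ #|V|)%R.
Proof.
move=> cV VB.
have s0 := sqrt_pos 3.
have := @closed_bound _ adjS (sqrt 3) 1 set0 Bx s0 ltac:(lra).
move=> H.
have := H _ _ cV VB; rewrite /Wt pow1 Rmult_1_r; apply.
move=> x xB; exists [set x; sgm x]; split.
- by rewrite !inE eqxx.
- move=> c y; rewrite !inE (adjS_sym y c) orbb => /orP[/eqP ->|/eqP ->] /adjS_sig ->.
    by rewrite eqxx orbT.
  by rewrite sgm_inv // eqxx.
- move=> W cW xW; apply/subsetP => c; rewrite !inE => /orP[/eqP ->|/eqP ->] //.
  by apply: (cW x); rewrite // adjS_sig'.
- rewrite pow1 Rmult_1_r.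
  case: (eqVneq x (sgm x)) => [e|ne].
    have -> : [set x; sgm x] = [set x] by rewrite -e setUid.
    rewrite cards1 /= Rmult_1_r.
    have h : adjS x x by rewrite {2}e adjS_sig'.
    apply: Rle_trans (le_INR _ _ (leP (cnt_loop _ h))) _.
    have -> : [set x] :\ x = set0 by apply/setP => y; rewrite !inE; case: eqP.
    rewrite cnt0 /=; have : (1 <= 3)%R by lra.
    move=> h3; rewrite -sqrt_1; apply: sqrt_le_1_alt; lra.
  have [c1 _] := cnt_path (adj := adjS) (x0 := x) (q := [:: x; sgm x]) ltac:(by rewrite /= inE ne)
    ltac:(by move=> i j ij; case: j ij => [|[|j]] //; case: i) 
    ltac:(by move=> [|i] //= _; rewrite adjS_sig').
  have -> : [set x; sgm x] = [set y in [:: x; sgm x]] by apply/setP => y; rewrite !inE.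
  rewrite cardsE; move/card_uniqP: (ltac:(by rewrite /= inE ne) : uniq [:: x; sgm x]) => ->.
  apply: Rle_trans (le_INR _ _ (leP c1)) _.
  by rewrite sqrt3_sq /=; lra.
Qed.
Definition Frob (H : {set cube F}) := is_Frobenius_GNS (S_of H) F.

Lemma cube_pt_inj (c c' : cube F) : cube_pt c = cube_pt c' -> c = c'.
Proof. by move=> e; apply: cube_eqP => i; have := congr1 (fun f => f i) e. Qed.

Lemma mk_pt (c : cube F) (p : pt d) : (forall i, c i = p i :> nat) -> cube_pt c = p.
Proof. by move=> h; apply: functional_extensionality => i; rewrite /cube_pt h. Qed.

Lemma S_notin (H : {set cube F}) c : c \notin H -> S_of H (cube_pt c).
Proof.
move=> cH [c' [c'H e]]; move/cube_pt_inj: e => e; subst c'; by rewrite c'H in cH.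
Qed.

Lemma hole_of (H : {set cube F}) p : ~ S_of H p -> exists c, c \in H /\ cube_pt c = p.
Proof. by move=> h; apply: NNPP. Qed.

Lemma frob_mkF (H : {set cube F}) : Frob H -> mk F \in H.
Proof.
move=> [_ [nSF _]]; have [c [cH e]] := hole_of nSF.
suff -> : mk F = c by [].
by apply: cube_eqP => i; rewrite mkE // -(congr1 (fun f => f i) e).
Qed.

Lemma frob_mk0 (H : {set cube F}) : Frob H -> mk (@pt0 d) \notin H.
Proof.
move=> [[S0 _] _]; apply/negP => h; apply: S0; exists (mk (@pt0 d)); split => //.
by apply: mk_pt => i; rewrite mkE.
Qed.

Lemma frob_add (H : {set cube F}) c1 c2 c : Frob H -> c1 \notin H -> c2 \notin H -> c \in H ->
  (forall i, c1 i + c2 i = c i :> nat) -> False.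
Proof.
move=> [[_ [Sadd _]] _] h1 h2 hc e.
have := Sadd _ _ (S_notin h1) (S_notin h2).
have -> : ptadd (cube_pt c1) (cube_pt c2) = cube_pt c.
  by apply: functional_extensionality => i; rewrite /ptadd /cube_pt e.
by apply; exists c.
Qed.

Definition csum (c : cube F) := \sum_(i < d) (c i : nat).

Lemma frob_Bx (H : {set cube F}) c : Frob H -> c \in H -> c \in Bx.
Proof.
move=> fr cH; move: (fr) => [_ [_ [_ umax]]].
set A := [pred c' : cube F | (c' \in H) && [forall i, c i <= c' i]].
have Ac : A c by rewrite /A /= cH; apply/forallP.
case: (arg_maxnP csum Ac) => cs /andP[csH /forallP ccs] mx.
have e : cube_pt cs = F.
  apply: umax; first by move=> nS; apply: nS; exists cs.
  move=> h' nh [hle hne].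
  have [c'' [c''H e'']] := hole_of nh.
  have Ac'' : A c''.
    rewrite /A /= c''H; apply/forallP => i; apply: leq_trans (ccs i) _.
    by have := hle i; rewrite -e''.
  have := mx _ Ac''; rewrite /csum => hs.
  have ex : exists i, cs i < c'' i.
    apply: NNPP => nex; apply: hne; rewrite -e''; apply: functional_extensionality => i.
    have := hle i; rewrite -e'' /cube_pt => h1.
    apply/eqP; rewrite eqn_leq h1 /=; rewrite leqNgt; apply/negP => h2; apply: nex; by exists i.
  case: ex => i0 lt0.
  have : \sum_(i < d) (cs i : nat) < \sum_(i < d) (c'' i : nat).
    rewrite (bigD1 i0) //= [X in _ < X](bigD1 i0) //= -addSn.
    apply: leq_add => //; apply: leq_sum => i _.
    by have := hle i; rewrite -e''.
  by rewrite ltnNge; move: hs => /= ->.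
rewrite inBx; apply/forallP => i; apply: leq_trans (ccs i) _.
by have := congr1 (fun f => f i) e => /= <-.
Qed.
Definition VH := [set H : {set cube F} | asbool (Frob H)].
Lemma VH_frob H : H \in VH -> Frob H.
Proof. by rewrite inE /asbool; case: (excluded_middle_informative _). Qed.

Definition mk0 := mk (@pt0 d).
Definition mkF := mk F.
Lemma mk0E i : mk0 i = 0 :> nat.
Proof. by rewrite mkE. Qed.
Lemma mkFE i : mkF i = F i :> nat.
Proof. by rewrite mkE. Qed.
Lemma sgm_mk0 : sgm mk0 = mkF.
Proof. by apply: cube_eqP => i; rewrite sgmE mk0E mkFE subn0. Qed.
Lemma mkF_Bx : mkF \in Bx.
Proof. by rewrite inBx; apply/forallP => i; rewrite mkFE. Qed.
Lemma mk0_Bx : mk0 \in Bx.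
Proof. by rewrite inBx; apply/forallP => i; rewrite mk0E. Qed.

Definition caseB (L : {set cube F}) (H : {set cube F}) := [exists l in L :\ mk0, sgm l \in H].

Lemma frob_l_sig (H : {set cube F}) l : Frob H -> l \in Bx -> (l \in H) || (sgm l \in H).
Proof.
move=> fr lB; apply/negPn/negP => /norP[h1 h2].
apply: (frob_add fr h1 h2 (frob_mkF fr)) => i.
rewrite sgmE mkE //; move: lB; rewrite inBx => /forallP /(_ i) h. exact: subnKC h.
Qed.

Lemma adjS_Bx (c y : cube F) : adjS c y -> c \in Bx /\ y \in Bx.
Proof.
move/adjS_E => h; rewrite !inBx; split; apply/forallP => i; have := h i; lia.
Qed.

Lemma countCA (L : {set cube F}) : mk0 \in L -> L \subset Bx -> mkF \notin L ->
  [set H in VH | ~~ caseB L H] = set0 \/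
  (2 * #|L| <= #|Bx| /\
   (INR #|[set H in VH | ~~ caseB L H]| <= sqrt 3 ^ (#|Bx| - 2 * #|L|))%R).
Proof.
move=> L0 LB FL.
set CA := [set H in VH | ~~ caseB L H].
have LBx : forall l, l \in L -> l \in Bx by move=> l; apply: (subsetP LB).
have facts : forall H, H \in CA -> [/\ Frob H,
    (forall l, l \in L -> l != mk0 -> l \in H),
    (forall l, l \in L -> l != mk0 -> sgm l \notin H) & mk0 \notin H].
  move=> H; rewrite inE => /andP[/VH_frob fr nc].
  have nb : forall l, l \in L -> l != mk0 -> sgm l \notin H.
    move=> l lL l0; apply/negP => h; move/negP: nc; apply; apply/existsP; exists l.
    by rewrite !inE l0 lL h.
  split => //; last exact: frob_mk0 fr.
  move=> l lL l0; have := frob_l_sig fr (LBx _ lL); by rewrite (negbTE (nb _ lL l0)) orbF.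
case: (set_0Vmem CA) => [->|[H0 H0CA]]; [by left|right].
have [fr0 inH0 ninH0 mk0H0] := facts H0 H0CA.
have dis : L :&: sgm @: L = set0.
  apply/setP => c; rewrite !inE; apply/negP => /andP[cL /imsetP[l lL el]].
  case: (eqVneq l mk0) => [l0|l0].
    by move: cL; rewrite el l0 sgm_mk0 (negbTE FL).
  case: (eqVneq c mk0) => [c0|c0].
    have : l = mkF by rewrite -(sgm_inv (LBx _ lL)) -el c0 sgm_mk0.
    by move=> e; move: lL; rewrite e (negbTE FL).
  by move: (inH0 c cL c0) (ninH0 l lL l0); rewrite -el => ->.
have cardSL : #|sgm @: L| = #|L|.
  by apply: card_in_imset => a b aL bL; apply: sgm_inj; apply: LBx.
have cardLU : #|L :|: sgm @: L| = 2 * #|L|.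
  by rewrite cardsU dis cards0 subn0 cardSL mul2n addnn.
have subLU : L :|: sgm @: L \subset Bx.
  apply/subsetP => c; rewrite inE => /orP[/LBx //|/imsetP[l _ ->]]; exact: sgm_Bx.
set U := Bx :\: (L :|: sgm @: L).
have cardU : #|U| = #|Bx| - 2 * #|L| by rewrite cardsDS // cardLU.
split; first by rewrite -cardLU; apply: subset_leq_card.
have UB : U \subset Bx by apply: subsetDl.
have cU : closedP adjS U.
  move=> c y; rewrite inE => /andP[cLU cB] a.
  have ey : y = sgm c.
    case/orP: a => a; first exact: adjS_sig a.
    have [yB _] := adjS_Bx a.
    by rewrite -(sgm_inv yB) -(adjS_sig a).
  rewrite ey inE sgm_Bx andbT inE negb_or; apply/andP; split.
    apply/negP => h; move/negP: cLU; apply; rewrite inE; apply/orP; right.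
    by apply/imsetP; exists (sgm c) => //; rewrite sgm_inv.
  apply/negP => /imsetP[l lL e]; move/negP: cLU; apply; rewrite inE; apply/orP; left.
  by rewrite (sgm_inj cB (LBx _ lL) e).
set f := fun H : {set cube F} => (Bx :\: H) :&: U.
have formula : forall H, H \in CA -> forall c,
    (c \in H) = ((c \in U) && (c \notin f H)) || ((c \in L) && (c != mk0)) || (c == mkF).
  move=> H HCA c; have [fr inH ninH mk0H] := facts H HCA.
  case cU' : (c \in U).
    have cB : c \in Bx by move: cU'; rewrite inE => /andP[].
    have cL : c \notin L by move: cU'; rewrite !inE negb_or => /andP[/andP[]].
    have cF : c != mkF.
      apply/negP => /eqP e; move: cU'; rewrite !inE negb_or e => /andP[/andP[_ h] _].
      by move/negP: h; apply; apply/imsetP; exists mk0; rewrite // sgm_mk0.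
    by rewrite /f in_setI in_setD cU' cB (negbTE cL) (negbTE cF) /= !andbT !orbF negbK.
  rewrite /=.
  case cL : (c \in L) => /=.
    case: (eqVneq c mk0) => [->|c0] /=; last by rewrite inH.
    rewrite (negbTE mk0H); apply/esym/negP => /eqP e.
    by move: FL; rewrite -e L0.
  case: (eqVneq c mkF) => [->|cF]; first exact: frob_mkF fr.
  apply/negP => cH.
  have cB : c \in Bx := frob_Bx fr cH.
  move: cU'; rewrite in_setD in_setU cB cL /= andbT => /negbT; rewrite negbK => /imsetP[l lL el].
  case: (eqVneq l mk0) => [l0|l0].
    by move/eqP: cF; apply; rewrite el l0 sgm_mk0.
  by move: (ninH l lL l0); rewrite -el cH.
have inj : {in CA &, injective f}.
  move=> H1 H2 h1 h2 e; apply/setP => c; by rewrite (formula _ h1) (formula _ h2) e.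
have le : #|CA| <= cnt adjS U.
  rewrite -(card_in_imset inj); apply: subset_leq_card; apply/subsetP => I /imsetP[H HCA ->].
  have [fr _ _ _] := facts H HCA.
  rewrite inE subsetIr /=; apply/indepP => x y; rewrite !inE => /andP[/andP[xH _] _] /andP[/andP[yH _] _].
  apply/negP => a; apply: (frob_add fr xH yH (frob_mkF fr)) => i.
  by rewrite mkFE; apply: adjS_E.
apply: Rle_trans (le_INR _ _ (leP le)) _.
rewrite -cardU; exact: countA cU UB.
Qed.

Lemma card_bigcup_le (I : finType) (P : pred I) (S : I -> {set {set cube F}}) :
  #|\bigcup_(i | P i) S i| <= \sum_(i | P i) #|S i|.
Proof.
apply: (big_rec2 (fun (A : {set {set cube F}}) (s : nat) => is_true (#|A| <= s))); first by rewrite cards0.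
move=> i A s _ h; apply: leq_trans (leq_card_setU _ _) _; exact: leq_add.
Qed.

Lemma countCB (L : {set cube F}) : L \subset Bx ->
  #|[set H in VH | caseB L H]| <= \sum_(l in L :\ mk0) cnt (adjST (cube_pt l)) Bx.
Proof.
move=> LB.
apply: leq_trans (_ : #|\bigcup_(l in L :\ mk0) [set H in VH | sgm l \in H]| <= _).
  apply: subset_leq_card; apply/subsetP => H; rewrite !inE => /andP[HV /existsP[l]].
  rewrite !inE => /andP[lL hl]; apply/bigcupP; exists l; by rewrite ?inE ?HV.
apply: leq_trans (card_bigcup_le _ _) _; apply: leq_sum => l; rewrite !inE => /andP[_ lL].
have lB : l \in Bx by apply: (subsetP LB).
set C := [set H in VH | sgm l \in H].
have inj : {in C &, injective (fun H => Bx :\: H)}.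
  move=> H1 H2 /setIdP[/VH_frob f1 _] /setIdP[/VH_frob f2 _] e.
  apply/setP => c; have := congr1 (fun X : {set cube F} => c \in X) e; rewrite !in_setD.
  case cB : (c \in Bx); rewrite ?andbT ?andbF.
    by move=> h; apply: negb_inj.
  move=> _; apply/idP/idP => h.
    by move: (frob_Bx f1 h); rewrite cB.
  by move: (frob_Bx f2 h); rewrite cB.
rewrite -(card_in_imset inj); apply: subset_leq_card; apply/subsetP => I /imsetP[H HC ->].
move: HC => /setIdP[/VH_frob fr slH].
rewrite inE subsetDl /=; apply/indepP => x y; rewrite !in_setD => /andP[xH _] /andP[yH _].
apply/negP => /orP[a|a].
  apply: (frob_add fr xH yH (frob_mkF fr)) => i; by rewrite mkFE; apply: adjS_E.
apply: (frob_add fr xH yH slH) => i; rewrite sgmE.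
have := adjT_E a i; rewrite /cube_pt => h; by rewrite -h addnK.
Qed.
End Geo.
Lemma l_nonzero d (F : pt d) (l : cube F) : l != mk0 F -> exists i0, 0 < l i0.
Proof.
move=> h; apply: NNPP => nex; move/eqP: h; apply; apply: cube_eqP => i.
rewrite mk0E; apply/eqP; rewrite -leqn0 leqNgt; apply/negP => h; apply: nex; by exists i.
Qed.

Lemma tp_card d (F : pt d) (l : cube F) (eps : R) : l \in Bx F -> (0 < eps < 1)%R ->
  (forall i, INR (l i) <= eps * INR (F i).+1)%R ->
  (INR #|Bx F :&: Tp F (cube_pt l)| <= (1 - (1 - eps) ^ d) * INR (normF F))%R.
Proof.
move=> lB [e0 e1] hl.
have lF : forall i, l i <= F i by move: lB; rewrite inBx => /forallP.
set Dl := [set c : cube F | [forall i, c i < (F i).+1 - l i]].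
have cD : #|Dl| = \prod_(i < d) ((F i).+1 - l i).
  apply: box_card => i; apply: leq_trans (leq_subr _ _) _; by rewrite ltnS F_le_max.
have DB : Dl \subset Bx F.
  apply/subsetP => c; rewrite !inE => /forallP h; apply/forallP => i; have := h i; lia.
have nE : #|Bx F| = normF F.
  rewrite /normF -(box_card (N := (maxF F).+1) (bnd := fun i => (F i).+1)); last first.
    by move=> i; rewrite ltnS F_le_max.
  by apply: eq_card => c; rewrite !inE; apply: eq_forallb => i.
have eT : Bx F :&: Tp F (cube_pt l) = Bx F :\: Dl.
  apply/setP => c; rewrite !inE andbC; congr (~~ _ && _).
  by apply: eq_forallb => i /=; rewrite /cube_pt; have := lF i => h; apply/idP/idP => h'; lia.
rewrite eT cardsDS // minus_INR; last by apply/leP; apply: subset_leq_card.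
rewrite nE.
have : ((1 - eps) ^ d * INR (normF F) <= INR #|Dl|)%R.
  rewrite cD; apply: prod_ge; first lra.
  move=> i; rewrite minus_INR; last by apply/leP; rewrite ltnW // ltnS lF.
  have := hl i; lra.
move=> h.
have -> : ((1 - (1 - eps) ^ d) * INR (normF F) = INR (normF F) - (1 - eps) ^ d * INR (normF F))%R by ring.
by apply: Rplus_le_compat_l; apply: Ropp_le_contravar.
Qed.

Theorem lemma6p4 (d : nat) (eps : R) (F : 'I_d -> nat) :
  (0 < eps < 1)%R ->
  (INR (NF F) <=
     Rpower (sqrt 3) ((1 - 2 * eps ^ d) * INR (normF F)) +
     eps ^ d * INR (normF F) * Rpower golden (INR (normF F)) *
       Rpower (golden / Rpower 5 (1 / 4))
              ((1 - (1 - eps) ^ d) * INR (normF F)))%R.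
Proof.
move=> [e0 e1].
change (golden / Rpower 5 (1 / 4))%R with cc.
have hNF : NF F = #|VH F| by [].
rewrite hNF.
have nE : #|Bx F| = normF F.
  rewrite /normF -(box_card (N := (maxF F).+1) (bnd := fun i => (F i).+1)); last first.
    by move=> i; rewrite ltnS F_le_max.
  by apply: eq_card => c; rewrite !inE; apply: eq_forallb => i.
have Lc_ge_gen : forall b : 'I_d -> nat, (forall i, eps * INR (F i).+1 <= INR (b i))%R ->
    (eps ^ d * INR (normF F) <= INR (\prod_(i < d) b i))%R.
  by move=> b hb; rewrite /normF; apply: prod_ge => //; lra.
have rge : (0 < d)%N -> (eps ^ d <= 1 - (1 - eps) ^ d)%R by move=> d0; apply: r_ge_e.
move: nE Lc_ge_gen rge.
move Hn: (normF F) => n.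
move He: (eps ^ d)%R => e.
move Hr: (1 - (1 - eps) ^ d)%R => r.
move=> nE Lc_ge_gen rge.
have P1 : (0 < Rpower (sqrt 3) ((1 - 2 * e) * INR n))%R by apply: exp_pos.
have ep : (0 < e)%R by rewrite -He; apply: pow_lt.
have P2 : (0 <= e * INR n * Rpower golden (INR n) * Rpower cc (r * INR n))%R.
  apply: Rmult_le_pos; [apply: Rmult_le_pos; [apply: Rmult_le_pos|]|];
    [lra | apply: pos_INR | apply: Rlt_le; apply: exp_pos | apply: Rlt_le; apply: exp_pos].
case: (boolP [forall i, F i == 0]) => [/forallP F0|/forallPn [iF FiF]].
  have -> : #|VH F| = 0.
    apply/eqP; rewrite cards_eq0; apply/eqP/setP => H; rewrite [in RHS]inE.
    apply/negbTE/negP => /VH_frob fr.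
    have e1' : mkF F = mk0 F by apply: cube_eqP => i; rewrite mkFE mk0E; apply/eqP.
    by have := frob_mk0 fr; rewrite -/(mk0 F) -e1' (frob_mkF fr).
  rewrite /=; lra.
have FiF0 : 0 < F iF by rewrite lt0n.
have d0 : (0 < d)%N by apply: leq_ltn_trans (leq0n _) (ltn_ord iF).
have n2 : (2 <= n)%N.
  rewrite -Hn /normF (bigD1 iF) //=.
  have : 0 < \prod_(i < d | i != iF) (F i).+1 by rewrite prodn_gt0.
  by move: FiF0; move: (\prod_(i < d | i != iF) (F i).+1) => p; nia.
have nR : (2 <= INR n)%R by apply: (le_INR 2); apply/leP.
have mF0 : mkF F != mk0 F.
  by apply/eqP => e'; have := congr1 (fun c : cube F => nat_of_ord (c iF)) e'; rewrite /= mkFE mk0E; lia.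
have bex : forall i, exists k : nat, (eps * INR (F i).+1 <= INR k < eps * INR (F i).+1 + 1)%R.
  by move=> i; apply: ceil_ex; have := pos_INR (F i).+1; nra.
have [b hb] : exists b : 'I_d -> nat, forall i,
    (eps * INR (F i).+1 <= INR (b i) < eps * INR (F i).+1 + 1)%R.
  exists (fun i => proj1_sig (constructive_indefinite_description _ (bex i))).
  by move=> i; case: (constructive_indefinite_description _ _).
have bF : forall i, (b i <= (F i).+1)%N.
  move=> i; have [_ h] := hb i; rewrite -ltnS; apply/ltP; apply: INR_lt.
  have e2 : INR (F i).+2 = (INR (F i) + 1 + 1)%R by rewrite !S_INR.
  have e3 : INR (F i).+1 = (INR (F i) + 1)%R by rewrite S_INR.
  rewrite e2; rewrite e3 in h; have := pos_INR (F i); nra.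
have b0 : forall i, (0 < b i)%N.
  move=> i; have [h _] := hb i; rewrite lt0n; apply/eqP => e'; rewrite e' in h.
  have e3 : INR (F i).+1 = (INR (F i) + 1)%R by rewrite S_INR.
  have := pos_INR (F i); rewrite e3 /= in h; nra.
have cardLc : #|[set c : cube F | [forall i, c i < b i]]| = \prod_(i < d) b i.
  by apply: box_card => i; apply: leq_trans (bF i) _; rewrite ltnS F_le_max.
have Lc_ge : (e * INR n <= INR (\prod_(i < d) b i))%R.
  by apply: Lc_ge_gen => i; case: (hb i).
rewrite -cardLc in Lc_ge.
have LcB : [set c : cube F | [forall i, c i < b i]] \subset Bx F.
  apply/subsetP => c; rewrite !inE => /forallP h; apply/forallP => i.
  by rewrite -ltnS; apply: leq_trans (h i) (bF i).
have m0L : mk0 F \in [set c : cube F | [forall i, c i < b i]] :\ mkF F.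
  by rewrite in_setD1 eq_sym mF0 inE; apply/forallP => i; rewrite mk0E.
have FLcE : mkF F \in [set c : cube F | [forall i, c i < b i]] -> forall i, F i < b i.
  by rewrite inE => /forallP h i; have := h i; rewrite mkFE.
have LcE : forall l, l \in [set c : cube F | [forall i, c i < b i]] -> forall i, l i < b i.
  by move=> l; rewrite inE => /forallP.
have LcE' : forall l, l \in Bx F -> (forall i, l i < b i) -> l \in [set c : cube F | [forall i, c i < b i]].
  by move=> l _ h; rewrite inE; apply/forallP.
move: cardLc Lc_ge LcB m0L FLcE LcE LcE'.
move: [set c : cube F | [forall i, c i < b i]] => Lc cardLc Lc_ge LcB m0L FLcE LcE LcE'.
have [k [hk1 hk2]] := @ceil_ex (e * INR n)%R ltac:(nra).
have k0 : (0 < k)%N.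
  by rewrite lt0n; apply/eqP => e'; rewrite e' /= in hk1; nra.
case: (leqP k #|Lc :\ mkF F|) => hkL.
- have [L [LLc m0 cL]] := exists_subset m0L k0 hkL.
  have LB : L \subset Bx F by apply: subset_trans LLc (subset_trans (subD1set _ _) LcB).
  have FL : mkF F \notin L.
    by apply/negP => h; have := subsetP LLc _ h; rewrite in_setD1 eqxx.
  have spl : #|VH F| = #|[set H in VH F | caseB L H]| + #|[set H in VH F | ~~ caseB L H]|.
    rewrite -(cardsID [set H | caseB L H] (VH F)); congr (_ + _); apply: eq_card => H;
      rewrite !inE; by case: (caseB L H); rewrite ?andbT ?andbF.
  rewrite spl plus_INR.
  have hA : (INR #|[set H in VH F | ~~ caseB L H]| <= Rpower (sqrt 3) ((1 - 2 * e) * INR n))%R.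
    case: (countCA m0 LB FL) => [->|[h2 hA]]; first by rewrite cards0 /=; lra.
    apply: Rle_trans hA _; rewrite nE cL; rewrite nE cL in h2.
    by apply: partA.
  have hB : (INR #|[set H in VH F | caseB L H]| <= INR k.-1 * (golden ^ n * Rpower cc (r * INR n)))%R.
    apply: Rle_trans (le_INR _ _ (leP (countCB LB))) _.
    have -> : k.-1 = #|L :\ mk0 F| by rewrite -cL (cardsD1 (mk0 F) L) m0.
    apply: sum_bound => l; rewrite in_setD1 => /andP[l0 lL].
    have [i0 hi0] := l_nonzero l0.
    have lLc : l \in Lc by have := subsetP LLc _ lL; rewrite in_setD1 => /andP[].
    have lB : l \in Bx F by apply: (subsetP LB).
    apply: Rle_trans (@countB d F (cube_pt l) i0 hi0) _.
    rewrite nE; apply: Rmult_le_compat_l; first by apply: pow_le; have := golden_gt1; lra.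
    apply: cc_pow_le; rewrite -Hr -Hn; apply: tp_card => // i.
    have hli := LcE l lLc i.
    have [_ h] := hb i.
    have h2 : (INR (l i) + 1 <= INR (b i))%R by rewrite -S_INR; apply: le_INR; apply/leP.
    apply: Rlt_le; apply: (Rplus_lt_reg_r 1); exact: Rle_lt_trans h2 h.
  have := @partB n k e r k0 hk2.
  lra.
- have FLc : mkF F \in Lc.
    apply: contraTT hkL => nF; rewrite -leqNgt.
    have e' : #|Lc :\ mkF F| = #|Lc| by rewrite (cardsD1 (mkF F) Lc) (negbTE nF).
    rewrite e'; rewrite -ltnS; apply/ltP; apply: INR_lt; rewrite S_INR; lra.
  have FB := FLcE FLc.
  have eLc : Lc = Bx F.
    apply/eqP; rewrite eqEsubset LcB /=; apply/subsetP => c cB; apply: LcE' => // i.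
    by move: cB; rewrite inBx => /forallP /(_ i) h; apply: leq_ltn_trans h (FB i).
  have kn : (n <= k)%N.
    have := cardsD1 (mkF F) (Bx F); rewrite mkF_Bx nE; move: hkL; rewrite eLc; lia.
  have hn : (INR n - 1 < e * INR n)%R.
    have := le_INR _ _ (leP kn); lra.
  have m1 : mk0 F \in [set mk0 F] by rewrite inE.
  have m1B : [set mk0 F] \subset Bx F by rewrite sub1set mk0_Bx.
  have m1F : mkF F \notin [set mk0 F] by rewrite inE.
  have eV : [set H in VH F | ~~ caseB [set mk0 F] H] = VH F.
    apply/setP => H; rewrite [in LHS]inE.
    have -> : caseB [set mk0 F] H = false.
      apply/negbTE/existsP => -[l]; rewrite !inE; by case: eqP.
    by rewrite andbT.
  case: (countCA m1 m1B m1F) => [e0'|[h2 hA]].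
    by rewrite eV in e0'; rewrite e0' cards0 /=; lra.
  rewrite eV nE cards1 muln1 in hA.
  apply: Rle_trans hA _.
  apply: special => //; last by lra.
  exact: rge.
Qed.
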